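(* Let $U_5=(\mathbb{N},F_5)$ where $F_5=\{f_i:i\in\mathbb{N}\setminus\{0\}\}$ and, for $i\ge1$, $j\in\mathbb{N}$, $f_i(j)=1$ if $i=j$ and $f_i(j)=0$ if $i\ne j$. Then $\operatorname{typ}_u(Tab(U_5),h)=t_5$, where $h$ is the depth and $t_5$ is the table with rows (indexed $i,d,a$; entries in columns $i,d,a$) $(\gamma,\epsilon,\epsilon)$, $(\gamma,\gamma,\gamma)$, $(\gamma,\gamma,\gamma)$.
   Context: Let $\mathbb{N}=\{0,1,2,\dots\}$; for $k\ge 2$, $E_k=\{0,\dots,k-1\}$; $\mathcal{P}(\mathbb{N})$ is the set of nonempty finite subsets of $\mathbb{N}$. For a nonempty set $F$, a decision table $T\in\mathcal{M}_k(F)$ is a rectangular table with $n\ge1$ columns labeled with attributes $f_1,\dots,f_n\in F$ (columns with the same label are equal), whose rows are pairwise different tuples in $E_k^n$ (possibly none), each row labeled with a set from $\mathcal{P}(\mathbb{N})$; $At(T)=\{f_1,\dots,f_n\}$, $\Delta(T)$ the set of rows; for a word $\alpha=(f_{i_1},\delta_1)\cdots(f_{i_m},\delta_m)$, $T\alpha$ is the subtable of rows with value $\delta_j$ in column $f_{i_j}$ for all $j$. Information system: $U=(A,F)$ with $A$ nonempty and $F$ a nonempty set of functions $A\to E_k$ (here $k=2$). A problem over $U$ is $z=(\nu,f_1,\dots,f_n)$ with $n\ge1$, $\nu:E_k^n\to\mathcal{P}(\mathbb{N})$, $f_1,\dots,f_n\in F$. Its table $T(z)\in\mathcal{M}_k(F)$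 has columns labeled $f_1,\dots,f_n$; $\bar\delta\in E_k^n$ is a row iff there is $x\in A$ with $f_j(x)=\delta_j$ for all $j$, and it is labeled $\nu(\bar\delta)$. $Tab(U)=\{T(z): z \text{ a problem over } U\}$ (a closed class, i.e. closed under removal of columns (keeping the first of equal rows), arbitrary changing of decision sets, permutation and duplication of columns). Decision trees over $\mathcal{M}_k(F)$: finite rooted directed trees with at least two nodes; root and edges leaving the root unlabeled; worker nodes (neither root nor terminal) labeled by attributes in $F$; edges leaving worker nodes labeled by elements of $E_k$; terminal nodes labeled by numbers in $\mathbb{N}$. For a complete path $\xi$, $\pi(\xi)$ is the word of pairs (attribute of worker node, label of leaving edge) along $\xi$, $\varphi(\xi)$ the word of those attributes, $\tau(\xi)$ the terminal label. A nondeterministic decision tree for $T$ uses only attributes in $At(T)$, satisfies $\bigcup_\xi\Delta(T\pi(\xi))=\Delta(T)$, and for every row $r\in\Delta(T\pi(\xi))$, $\tau(\xi)$ lies in the decision set of $r$. It is deterministic if exactly one edge leaves the root and edges leaving each worker node have distinct labels. The depth of a word is its length $h(\alpha)=|\alpha|$; $h(\Gamma)=\max_\xi h(\varphi(\xi))$. For $T$ with columns $f_1,\dots,f_n$: $h^i(T)=n$, $h^d(T)$ and $h^a(T)$ are the minimum depths of deterministic, respectively nondeterministic, decision trees for $T$. For $b,c\in\{i,d,a\}$ and a class $\mathcal{C}$, $\mathcal{U}^{bc}_{\mathcal{C}h}(n)=\max\{h^b(T):T\in\mathcal{C},h^c(T)\le n\}$ (defined iff this set is nonempty and finite). For a partial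 $g:\mathbb{N}\to\mathbb{N}$, $\mathrm{Dom}^+(g)=\{n\in\mathrm{Dom}(g):g(n)\ge n\}$, $\mathrm{Dom}^-(g)=\{n\in\mathrm{Dom}(g):g(n)\le n\}$; $\operatorname{typ}(g)$ is $\alpha$ if $\mathrm{Dom}(g)$ is infinite and $g$ bounded above; $\beta$ if $\mathrm{Dom}(g)$ infinite, $\mathrm{Dom}^+(g)$ finite, $g$ unbounded; $\gamma$ if $\mathrm{Dom}^+(g)$ and $\mathrm{Dom}^-(g)$ are infinite; $\delta$ if $\mathrm{Dom}(g)$ infinite and $\mathrm{Dom}^-(g)$ finite; $\epsilon$ if $\mathrm{Dom}(g)$ finite. $\operatorname{typ}_u(\mathcal{C},h)$ is the $3\times3$ table (rows and columns indexed $i,d,a$) with entry $\operatorname{typ}(\mathcal{U}^{bc}_{\mathcal{C}h})$ in row $b$, column $c$. *)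

(* Defs.v *)
(* Decision tables over information systems with k = 2
   (E_2 = bool: false = 0, true = 1), decision trees, depth measures,
   the functions U^{bc}_{C h} and their types. *)
From mathcomp Require Import all_boot.

Set Implicit Arguments.
Unset Strict Implicit.
Unset Printing Implicit Defensive.

(* A tree is the (unlabelled) root together with the list of nodes  *)
(* reached by the (unlabelled) edges leaving the root.              *)
Inductive dnode (Attr : Type) : Type :=
| Term of nat
| Work of Attr & seq (bool * dnode Attr).

Arguments Term {Attr} _.

Definition dtree (Attr : Type) := seq (dnode Attr).

Section Trees.
Variable Attr : eqType.

Fixpoint wf_node (t : dnode Attr) : bool :=
  match t with
  | Term _ => true
  | Work _ ch =>
      (0 < size ch) &&
      (fix go (l : seq (bool * dnode Attr)) : bool :=
         match l with [::] => true | (_, c) :: l' => wf_node c && go l' end) ch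
  end.

(* finite rooted tree with at least two nodes *)
Definition wf_tree (G : dtree Attr) : bool := (0 < size G) && all wf_node G.

Fixpoint det_node (t : dnode Attr) : bool :=
  match t with
  | Term _ => true
  | Work _ ch =>
      uniq (map fst ch) &&
      (fix go (l : seq (bool * dnode Attr)) : bool :=
         match l with [::] => true | (_, c) :: l' => det_node c && go l' end) ch
  end.

(* deterministic: exactly one edge leaves the root *)
Definition det_tree (G : dtree Attr) : bool := (size G == 1) && all det_node G.

Fixpoint node_attrs (t : dnode Attr) : seq Attr :=
  match t with
  | Term _ => [::]
  | Work a ch =>
      a :: (fix go (l : seq (bool * dnode Attr)) : seq Attr :=
              match l with [::] => [::] | (_, c) :: l' => node_attrs c ++ go l' end) ch
  end.

Definition tree_attrs (G : dtree Attr) : seq Attr := flatten (map node_attrs G).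

(* complete paths from a node to a terminal node: the word pi(xi) of
   pairs (attribute, edge label) and the terminal label tau(xi) *)
Fixpoint node_paths (t : dnode Attr) : seq (seq (Attr * bool) * nat) :=
  match t with
  | Term m => [:: ([::], m)]
  | Work a ch =>
      (fix go (l : seq (bool * dnode Attr)) : seq (seq (Attr * bool) * nat) :=
         match l with
         | [::] => [::]
         | (b, c) :: l' =>
             [seq ((a, b) :: p.1, p.2) | p <- node_paths c] ++ go l'
         end) ch
  end.

Definition tree_paths (G : dtree Attr) : seq (seq (Attr * bool) * nat) :=
  flatten (map node_paths G).

Definition depth (G : dtree Attr) : nat :=
  \max_(p <- tree_paths G) size p.1.

(* Decision tables: columns labelled by attributes, a set of rows   *)
(* (tuples in E_2^n, given as a predicate), and the decision sets   *)
(* (finite subsets of N given as sequences; for tables of problems  *)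
(* they are nonempty).                                              *)
Record table := Table {
  cols : seq Attr;
  rowp : seq bool -> Prop;
  dec  : seq bool -> seq nat }.

(* value of row r in (the first) column labelled f *)
Definition rval (T : table) (r : seq bool) (f : Attr) : bool :=
  nth false r (index f (cols T)).

Definition in_sub (T : table) (alpha : seq (Attr * bool)) (r : seq bool) : Prop :=
  rowp T r /\ all (fun fd => rval T r fd.1 == fd.2) alpha.

Definition tree_for (T : table) (G : dtree Attr) : Prop :=
  wf_tree G /\
  {subset tree_attrs G <= cols T} /\
  (forall r, rowp T r -> exists2 p, p \in tree_paths G & in_sub T p.1 r) /\
  (forall p, p \in tree_paths G -> forall r, in_sub T p.1 r -> p.2 \in dec T r).

Inductive measure := Mi | Md | Ma.

Definition hval (b : measure) (T : table) (m : nat) : Prop :=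
  match b with
  | Mi => m = size (cols T)
  | Md => (exists G, [/\ det_tree G, tree_for T G & depth G = m]) /\
          (forall G, det_tree G -> tree_for T G -> m <= depth G)
  | Ma => (exists G, tree_for T G /\ depth G = m) /\
          (forall G, tree_for T G -> m <= depth G)
  end.

End Trees.

(* Information systems U = (A, F) with k = 2: F is represented by   *)
(* the attribute type Attr with evaluation ev : Attr -> A -> bool.  *)
Section Problems.
Variables (A : Type) (Attr : eqType) (ev : Attr -> A -> bool).

Record problem := Problem { pattrs : seq Attr; pnu : seq bool -> seq nat }.

Definition valid_problem (z : problem) : Prop :=
  (0 < size (pattrs z))%N /\
  forall d : seq bool, size d = size (pattrs z) -> pnu z d != [::].

Definition tab_of (z : problem) : table Attr :=
  {| cols := pattrs z;
     rowp := fun d => exists x : A, d = [seq ev f x | f <- pattrs z];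
     dec  := pnu z |}.

Definition Uset (b c : measure) (n w : nat) : Prop :=
  exists z, [/\ valid_problem z, hval b (tab_of z) w &
                exists2 m, hval c (tab_of z) m & m <= n].

(* graph of the partial function U^{bc}_{Tab(U) h}: defined at n iff
   S(n) is nonempty and finite, with value max S(n) *)
Definition Ufun (b c : measure) (n v : nat) : Prop :=
  Uset b c n v /\ forall w, Uset b c n w -> w <= v.

End Problems.

Definition infinite_nat (S : nat -> Prop) : Prop := forall N, exists2 n, N <= n & S n.
Definition finite_nat (S : nat -> Prop) : Prop := exists N, forall n, S n -> n < N.

Section Types.
Variable g : nat -> nat -> Prop.
Definition Dom n := exists v, g n v.
Definition DomP n := exists2 v, g n v & n <= v.
Definition DomM n := exists2 v, g n v & v <= n.
Definition bounded := exists B, forall n v, g n v -> v <= B.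
End Types.

Inductive typ := Talpha | Tbeta | Tgamma | Tdelta | Tepsilon.

Definition has_typ (g : nat -> nat -> Prop) (t : typ) : Prop :=
  match t with
  | Talpha => infinite_nat (Dom g) /\ bounded g
  | Tbeta => [/\ infinite_nat (Dom g), finite_nat (DomP g) & ~ bounded g]
  | Tgamma => infinite_nat (DomP g) /\ infinite_nat (DomM g)
  | Tdelta => infinite_nat (Dom g) /\ finite_nat (DomM g)
  | Tepsilon => finite_nat (Dom g)
  end.

Definition attr5 := {i : nat | (0 < i)%N}.
Definition ev5 (f : attr5) (j : nat) : bool := sval f == j.

Definition U5 (b c : measure) : nat -> nat -> Prop := Ufun ev5 b c.

Definition t5 (b c : measure) : typ :=
  match b, c with
  | Mi, Mi => Tgamma
  | Mi, _ => Tepsilon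
  | _, _ => Tgamma
  end.

(* Main.v *)
Require Import Defs.
From mathcomp Require Import all_boot.

Set Implicit Arguments.
Unset Strict Implicit.
Unset Printing Implicit Defensive.

Definition rv (cs : seq attr5) (r : seq bool) (a : attr5) := nth false r (index a cs).

Fixpoint chain (dj : attr5 -> nat) (t : nat) (L : seq attr5) : dnode attr5 :=
  match L with
  | [::] => Term t
  | a :: L' => Work a [:: (true, Term (dj a)); (false, chain dj t L')]
  end.

Lemma chain_sound cs dj t L : forall (R : seq bool -> Prop) (D : seq bool -> seq nat),
 (forall a r, a \in L -> R r -> rv cs r a -> dj a \in D r) ->
 (forall r, R r -> all (fun a => ~~ rv cs r a) L -> t \in D r) ->
 forall p, p \in node_paths (chain dj t L) -> forall r, R r ->
   all (fun fd => rv cs r fd.1 == fd.2) p.1 -> p.2 \in D r.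
Proof.
elim: L => [|a L IH] R D H1 H2 p /=.
- rewrite inE => /eqP -> r Rr _; exact: H2.
- rewrite inE cats0 => /orP [/eqP -> | /mapP [q hq ->]] r Rr /=.
  + rewrite andbT => /eqP ha; apply: H1 => //; by rewrite inE eqxx.
  + case/andP => [/eqP ha hall].
    apply: (IH (fun r => R r /\ rv cs r a = false)) => //.
    * move=> a' r' ha' [Rr' _] h; apply: H1 => //; by rewrite inE ha' orbT.
    * move=> r' [Rr' ha'] hall'; apply: H2 => //=; by rewrite ha' hall'.
Qed.

Lemma chain_complete cs dj t L r :
  exists2 p, p \in node_paths (chain dj t L) &
   all (fun fd => rv cs r fd.1 == fd.2) p.1.
Proof.
elim: L => [|a L [q hq hall]] /=.
- by exists ([::], t); rewrite //= mem_head.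
- case ha: (rv cs r a).
  + by exists ([:: (a, true)], dj a); rewrite //= ?mem_head ?ha.
  + exists ((a, false) :: q.1, q.2); last by rewrite /= ha hall.
    by rewrite inE cats0 (map_f (fun p => ((a, false) :: p.1, p.2)) hq) orbT.
Qed.

Lemma chain_size dj t L p : p \in node_paths (chain dj t L) -> size p.1 <= size L.
Proof.
elim: L p => [|a L IH] p /=.
- by rewrite inE => /eqP ->.
- rewrite inE cats0 => /orP [/eqP -> // | /mapP [q hq ->] /=].
  by rewrite ltnS IH.
Qed.

Lemma chain_wf dj t L : wf_node (chain dj t L) && det_node (chain dj t L).
Proof. by elim: L => //= a L /andP [-> ->]. Qed.

Lemma chain_attrs dj t L : node_attrs (chain dj t L) = L.
Proof. by elim: L => //= a L ->; rewrite cats0. Qed.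

Lemma ev0 (f : attr5) : ev5 f 0 = false.
Proof. by case: f => [[|i] hi]. Qed.

Notation row z x := [seq ev5 f x | f <- pattrs z].

Lemma rval_row (z : problem attr5) x a : a \in pattrs z ->
  rval (tab_of ev5 z) (row z x) a = ev5 a x.
Proof. by move=> ha; rewrite /rval /= (nth_map a) ?index_mem // nth_index. Qed.

Lemma rval_out (z : problem attr5) r a : size r = size (pattrs z) -> a \notin pattrs z ->
  rval (tab_of ev5 z) r a = false.
Proof. by move=> hs ha; rewrite /rval /= nth_default // memNindex // hs. Qed.

Lemma rval_row0 (z : problem attr5) a : rval (tab_of ev5 z) (row z 0) a = false.
Proof.
case ha: (a \in pattrs z); first by rewrite rval_row // ev0.
by rewrite rval_out ?size_map ?ha.
Qed.

Lemma head_in (s : seq nat) : s != [::] -> head 0 s \in s.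
Proof. by case: s => //= x s _; rewrite mem_head. Qed.

Lemma path_depth (G : dtree attr5) p : p \in tree_paths G -> size p.1 <= depth G.
Proof. by move=> hp; rewrite /depth (leq_bigmax_seq (F := fun p => size p.1) p). Qed.

Definition djz (z : problem attr5) (a : attr5) := head 0 (pnu z (row z (sval a))).

Lemma chain_gen (z : problem attr5) t L : valid_problem z -> {subset L <= pattrs z} ->
  (forall r, rowp (tab_of ev5 z) r -> all (fun a => ~~ rval (tab_of ev5 z) r a) L ->
     t \in pnu z r) ->
  exists G, [/\ det_tree G, tree_for (tab_of ev5 z) G & depth G <= size L].
Proof.
move=> [_ hv] hL H2; exists [:: chain (djz z) t L].
have hp : tree_paths [:: chain (djz z) t L] = node_paths (chain (djz z) t L).
  by rewrite /tree_paths /= cats0.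
have /andP [hw hd] := chain_wf (djz z) t L.
split.
- by rewrite /det_tree /= hd.
- split; first by rewrite /wf_tree /= hw.
  split; first by rewrite /tree_attrs /= cats0 chain_attrs.
  split.
  + move=> r hr; have [p hp1 hp2] := chain_complete (pattrs z) (djz z) t L r.
    by exists p; rewrite ?hp.
  + rewrite hp => p hp1 r [hr hall].
    apply: (chain_sound (cs := pattrs z) (R := rowp (tab_of ev5 z))) hp1 r hr hall.
    * move=> a r' ha [x ->]; rewrite -[rv _ _ _]/(rval (tab_of ev5 z) _ a) rval_row ?hL //.
      move/eqP => <-; apply: head_in; apply: hv; by rewrite size_map.
    * exact: H2.
- rewrite /depth hp; apply/bigmax_leqP_seq => p hp1 _; exact: chain_size hp1.
Qed.

Lemma full_chain (z : problem attr5) : valid_problem z ->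
  exists G, [/\ det_tree G, tree_for (tab_of ev5 z) G & depth G <= size (pattrs z)].
Proof.
move=> hz; apply: (chain_gen (t := head 0 (pnu z (row z 0)))) => //.
move=> r [x ->] hall.
have -> : row z x = row z 0.
  apply/eq_in_map => f hf; rewrite ev0.
  by have /allP /(_ f hf) := hall; rewrite rval_row // => /negbTE.
by apply: head_in; case: hz => _ hv; apply: hv; rewrite size_map.
Qed.

Lemma nd_to_d (z : problem attr5) G : valid_problem z -> tree_for (tab_of ev5 z) G ->
  exists G', [/\ det_tree G', tree_for (tab_of ev5 z) G' & depth G' <= depth G].
Proof.
move=> hz [hw [hs [hcov hdec]]].
have [p hp [_ hall]] := hcov (row z 0) (ex_intro _ 0 erefl).
set L := [seq a <- map fst p.1 | a \in pattrs z].
have sL : {subset L <= pattrs z} by move=> a; rewrite mem_filter => /andP [].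
have H2 : forall r, rowp (tab_of ev5 z) r -> all (fun a => ~~ rval (tab_of ev5 z) r a) L ->
     p.2 \in pnu z r.
  move=> r hr hall'; apply: (hdec p hp); split => //.
  apply/allP => fd hfd.
  have /allP /(_ fd hfd) := hall; rewrite rval_row0 => /eqP <-.
  case hf: (fd.1 \in pattrs z).
  + have : fd.1 \in [seq a <- map fst p.1 | a \in pattrs z].
      by rewrite mem_filter hf (map_f fst hfd).
    by move/(allP hall'); case: (rval _ _ _).
  + rewrite rval_out ?hf //; by case: hr => x ->; rewrite size_map.
have [G' [h1 h2 h3]] := chain_gen hz sL H2.
exists G'; split => //; apply: (leq_trans h3); apply: leq_trans (path_depth hp).
  by rewrite size_filter (leq_trans (count_size _ _)) // size_map.
Qed.

Definition f_ (k : nat) : attr5 := exist (fun i => 0 < i) k.+1 (ltn0Sn k).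
Definition colsn n := [seq f_ k | k <- iota 0 n].
Definition zn n : problem attr5 :=
  Problem (colsn n) (fun d : seq bool => if has (fun b => b) d then [:: 1] else [:: 0]).

Lemma f_inj : injective f_.
Proof. by move=> i j /(congr1 val) [->]. Qed.

Lemma zn_lower n G : tree_for (tab_of ev5 (zn n)) G -> n <= depth G.
Proof.
move=> [_ [_ [hcov hdec]]].
have r0 : rowp (tab_of ev5 (zn n)) (row (zn n) 0) by exists 0.
have [p hp hall] := hcov _ r0.
have := hdec p hp _ hall.
rewrite /=.
have -> : has (fun b => b) (row (zn n) 0) = false.
  by rewrite has_map; apply/hasPn => f _ /=; rewrite ev0.
rewrite /= inE => /eqP hp2.
have claim : forall k, k < n -> f_ k \in map fst p.1.
  move=> k hk; apply/negPn/negP => hnot.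
  have rk : rowp (tab_of ev5 (zn n)) (row (zn n) k.+1) by exists k.+1.
  have hin : f_ k \in pattrs (zn n) by rewrite /= /colsn map_f // mem_iota.
  have := hdec p hp (row (zn n) k.+1); rewrite [dec _ _]/=.
  have -> : has (fun b => b) (row (zn n) k.+1).
    by apply/hasP; exists (ev5 (f_ k) k.+1); rewrite ?(map_f (fun f => ev5 f k.+1)) // /ev5 /=.
  rewrite hp2 /= inE => /(_ _) H; suff : false by [].
  apply: H; split => //.
  case: hall => _ /allP hall; apply/allP => fd hfd.
  have := hall fd hfd; rewrite rval_row0 => /eqP <-.
  case hf: (fd.1 \in pattrs (zn n)).
  + rewrite rval_row // /ev5; apply/eqP/negbTE/eqP => e.
    move: hnot.
    have -> : f_ k = fd.1 by apply: val_inj; rewrite /= e.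
    by rewrite (map_f fst hfd).
  + by rewrite rval_out ?hf // size_map.
apply: leq_trans (path_depth hp).
rewrite -(size_map fst) -[n](size_iota 0) -(size_map f_).
apply: uniq_leq_size; first by rewrite (map_inj_uniq f_inj) iota_uniq.
by move=> a /mapP [k]; rewrite mem_iota add0n => /andP [_ hk] ->; apply: claim.
Qed.

Lemma zn_valid n : 0 < n -> valid_problem (zn n).
Proof. by move=> hn; split; [rewrite /= size_map size_iota | move=> d _ /=; case: ifP]. Qed.

Lemma zn_hval n b : 0 < n -> hval b (tab_of ev5 (zn n)) n.
Proof.
move=> hn; have [G [h1 h2 h3]] := full_chain (zn_valid hn).
have e : depth G = n.
  apply/eqP; rewrite eqn_leq zn_lower // andbT.
  by move: h3; rewrite /= size_map size_iota.
case: b => /=.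
- by rewrite size_map size_iota.
- split; first by exists G.
  by move=> G' _ /zn_lower.
- split; first by exists G.
  by move=> G' /zn_lower.
Qed.

Lemma hval_uniq b (T : table attr5) w m : b <> Mi -> hval b T w -> hval b T m -> w = m.
Proof.
case: b => //= _.
- move=> [[G [hd hG <-]] min1] [[G' [hd' hG' <-]] min2].
  by apply/eqP; rewrite eqn_leq (min1 G' hd' hG') (min2 G _ hG) //; case: hd.
- move=> [[G [hG <-]] min1] [[G' [hG' <-]] min2].
  by apply/eqP; rewrite eqn_leq (min1 G' hG') (min2 G hG).
Qed.

Lemma gamma_of b c : (forall n, 0 < n -> Uset ev5 b c n n) ->
  (forall n w, Uset ev5 b c n w -> w <= n) -> has_typ (U5 b c) Tgamma.
Proof.
move=> h1 h2; have H : forall n, 0 < n -> U5 b c n n by move=> n hn; split; [exact: h1 | exact: h2].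
by split => N; exists N.+1 => //; exists N.+1 => //; apply: H.
Qed.

Lemma eps_of c : c <> Mi -> has_typ (U5 Mi c) Tepsilon.
Proof.
move=> hc; exists 0 => n [v [_ hmax]]; exfalso.
set z : problem attr5 := Problem (nseq v.+1 (f_ 0)) (fun _ => [:: 0]).
have : v.+1 <= v; last by rewrite ltnn.
apply: hmax; exists z; split => //=.
- by rewrite size_nseq.
- exists 0 => //.
  have hT : tree_for (tab_of ev5 z) [:: Term 0].
    split => //; split => //; split.
    + by move=> r hr; exists ([::], 0); rewrite /= ?inE.
    + by move=> p; rewrite /tree_paths /= inE => /eqP -> r _; rewrite inE.
  have hd : depth [:: @Term attr5 0] = 0 by rewrite /depth /tree_paths /= big_cons big_nil.
  case: c hc => //= _; split => //.
  + by exists [:: Term 0].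
  + by exists [:: Term 0].
Qed.

Theorem lemma13 : forall b c : measure, has_typ (U5 b c) (t5 b c).
Proof.
have U : forall b c n, 0 < n -> Uset ev5 b c n n.
  move=> b c n hn; exists (zn n); split; [exact: zn_valid | exact: zn_hval |].
  by exists n => //; apply: zn_hval.
case=> [] [] /=; try (apply: eps_of; discriminate); apply: gamma_of; try (by move=> n; apply: U);
  move=> n w [z [hz hb [m hc hmn]]]; apply: leq_trans hmn.
- by move: hb hc => /= -> ->.
- case: hb => _ min; have [G [h1 h2 h3]] := full_chain hz.
  by rewrite /= in hc; rewrite hc (leq_trans (min G h1 h2)).
- by rewrite (hval_uniq _ hb hc).
- case: hb => _ min; case: hc => [[G [hG <-]] _].
  have [G' [h1 h2 h3]] := nd_to_d hz hG.
  exact: leq_trans (min G' h1 h2) h3.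
- case: hb => _ min; have [G [h1 h2 h3]] := full_chain hz.
  by rewrite /= in hc; rewrite hc (leq_trans (min G h2)).
- case: hb => _ min; case: hc => [[G [h1 h2 <-]] _]; exact: min.
- by rewrite (hval_uniq _ hb hc).
Qed.
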